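(* Consider a region discretized by the FDTD-Q scheme described in the context, with time step $\Delta t$ satisfying $$0<\Delta t<\Delta t_{\mathrm{CFL,gen}}=\frac{2}{\rho\!\left(\frac{1}{\hbar}(D_V'')^{-1/2}H(D_V'')^{-1/2}\right)},$$ where $\rho(\cdot)$ denotes the spectral radius. Then the total probability $\mathcal{P}^n=(\psi^n)^T\mathbf{P}\,\psi^n$ satisfies $\mathcal{P}^n\ge 0$ for all $n=0,1,\dots,n_t$, and the total probability and the probability current satisfy $$\frac{\mathcal{P}^{n+1}-\mathcal{P}^n}{\Delta t}=-\mathcal{I}_P^{n+\frac12},\qquad n=0,1,\dots,n_t-1.$$
   Context: Fix constants $\hbar>0$, $m>0$, cell sizes $\Delta x,\Delta y,\Delta z>0$, positive integers $n_x,n_y,n_z,n_t$ and a time step $\Delta t>0$. The region is a box made of $n_x\times n_y\times n_z$ primary cells of size $\Delta x\times\Delta y\times\Delta z$, with primary nodes $(i,j,k)$, $1\le i\le n_x+1$, $1\le j\le n_y+1$, $1\le k\le n_z+1$. Let $N=(n_x+1)(n_y+1)(n_z+1)$; vectors indexed by nodes use the ordering $i+(j-1)(n_x+1)+(k-1)(n_x+1)(n_y+1)$. Real potential values $U_{i,j,k}$ are given at the nodes; $D_U$ is the $N\times N$ diagonal matrix containing them. Let $I_p$ be the $p\times p$ identity, $\tilde I_p=\mathrm{diag}(\tfrac12,1,\dots,1,\tfrac12)$ ($p\times p$), $W_p=[0_{p\times1}\ I_p]-[I_p\ 0_{p\times 1}]$ ($p\times(p+1)$), $\otimes$ the Kronecker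 product, and $e\{p,q\}$ the $q\times 1$ vector with $1$ in position $p$ and zeros elsewhere. Define $D_V''=\Delta x\Delta y\Delta z\,\tilde I_{n_z+1}\otimes\tilde I_{n_y+1}\otimes\tilde I_{n_x+1}$; $D=[D_x\ D_y\ D_z]$ with $D_x=-I_{n_z+1}\otimes I_{n_y+1}\otimes W_{n_x}^T$, $D_y=-I_{n_z+1}\otimes W_{n_y}^T\otimes I_{n_x+1}$, $D_z=-W_{n_z}^T\otimes I_{n_y+1}\otimes I_{n_x+1}$; $D_S''=\mathrm{diag}(\Delta y\Delta z\,\tilde I_{n_z+1}\otimes\tilde I_{n_y+1}\otimes I_{n_x},\ \Delta x\Delta z\,\tilde I_{n_z+1}\otimes I_{n_y}\otimes\tilde I_{n_x+1},\ \Delta x\Delta y\,I_{n_z}\otimes\tilde I_{n_y+1}\otimes\tilde I_{n_x+1})$; $D_l'=\mathrm{diag}(\Delta x\, I_{n_x(n_y+1)(n_z+1)},\ \Delta y\, I_{(n_x+1)n_y(n_z+1)},\ \Delta z\, I_{(n_x+1)(n_y+1)n_z})$; $H=\frac{\hbar^2}{2m}D D_S''(D_l')^{-1}D^T+D_V''D_U$; $\mathbf{P}=\begin{bmatrix}D_V''&-\frac{\Delta t}{2\hbar}H\\-\frac{\Delta t}{2\hbar}H&D_V''\end{bmatrix}$. Boundary (''hanging'') variables: $L=[L_W\ L_E\ L_S\ L_N\ L_B\ L_T]$ with $L_W=I_{n_z+1}\otimes I_{n_y+1}\otimes e\{1,n_x+1\}$, $L_E=I_{n_z+1}\otimes I_{n_y+1}\otimes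 e\{n_x+1,n_x+1\}$, $L_S=I_{n_z+1}\otimes e\{1,n_y+1\}\otimes I_{n_x+1}$, $L_N=I_{n_z+1}\otimes e\{n_y+1,n_y+1\}\otimes I_{n_x+1}$, $L_B=e\{1,n_z+1\}\otimes I_{n_y+1}\otimes I_{n_x+1}$, $L_T=e\{n_z+1,n_z+1\}\otimes I_{n_y+1}\otimes I_{n_x+1}$; let $M$ be the number of columns of $L$. $D_{\hat n}=\mathrm{diag}(-I_{(n_y+1)(n_z+1)},I_{(n_y+1)(n_z+1)},-I_{(n_x+1)(n_z+1)},I_{(n_x+1)(n_z+1)},-I_{(n_x+1)(n_y+1)},I_{(n_x+1)(n_y+1)})$; $D_{S,b}''=\mathrm{diag}(\Delta y\Delta z\,\tilde I_{n_z+1}\otimes\tilde I_{n_y+1},\ \Delta y\Delta z\,\tilde I_{n_z+1}\otimes\tilde I_{n_y+1},\ \Delta x\Delta z\,\tilde I_{n_z+1}\otimes\tilde I_{n_x+1},\ \Delta x\Delta z\,\tilde I_{n_z+1}\otimes\tilde I_{n_x+1},\ \Delta x\Delta y\,\tilde I_{n_y+1}\otimes\tilde I_{n_x+1},\ \Delta x\Delta y\,\tilde I_{n_y+1}\otimes\tilde I_{n_x+1})$; $H_\perp=\frac{\hbar^2}{2m}L D_{\hat n}D_{S,b}''$. FDTD-Q scheme: real vectors $\psi_R^n\in\mathbb{R}^N$ and $\psi_I^{n-\frac12}\in\mathbb{R}^N$ ($n=0,\dots,n_t$), and arbitrary boundary vectors $g_R^n\in\mathbb{R}^M$, $g_I^{n+\frac12}\in\mathbb{R}^M$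 ($n=0,\dots,n_t-1$), satisfying for $n=0,\dots,n_t-1$: $\hbar D_V''\frac{\psi_R^{n+1}-\psi_R^n}{\Delta t}=H\psi_I^{n+\frac12}-H_\perp g_I^{n+\frac12}$ and $\hbar D_V''\frac{\psi_I^{n+\frac12}-\psi_I^{n-\frac12}}{\Delta t}=-H\psi_R^n+H_\perp g_R^n$. Let $\psi^n=\begin{bmatrix}\psi_R^n\\ \psi_I^{n-\frac12}\end{bmatrix}$, $g^{n+\frac12}=\begin{bmatrix}g_R^n\\ g_I^{n+\frac12}\end{bmatrix}$, $J_1=\begin{bmatrix}0&1\\-1&0\end{bmatrix}$. Total probability: $\mathcal{P}^n=(\psi^n)^T\mathbf{P}\psi^n$, $n=0,\dots,n_t$. Probability current: $\mathcal{I}_P^{n+\frac12}=\frac{2}{\hbar}\left(\frac{\psi^{n+1}+\psi^n}{2}\right)^T(J_1\otimes H_\perp)g^{n+\frac12}$, $n=0,\dots,n_t-1$. *)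

(* Defs.v *)
From HB Require Import structures.
From mathcomp Require Import all_boot all_order all_algebra.
From mathcomp Require Import mxtens complex.
From mathcomp Require Import reals.
Unset Printing Implicit Defensive.
Import Order.TTheory GRing.Theory Num.Theory.
Local Open Scope ring_scope.

Section FDTDQ.
Context {R : realType}.

Definition Itil (p : nat) : 'M[R]_p :=
  diag_mx (\row_(i < p) (if ((i : nat) == 0%N) || ((i : nat) == p.-1)
                         then 2^-1 else 1)).

(* W_p = [0_{p x 1} I_p] - [I_p 0_{p x 1}]  (p x (p+1)), written entrywise *)
Definition Wmx (p : nat) : 'M[R]_(p, p.+1) :=
  \matrix_(i < p, j < p.+1) (((j : nat) == i.+1)%:R - ((j : nat) == i)%:R).

(* e{p,q}: q x 1 column with 1 in (1-based) position p *)
Definition ecol (p q : nat) : 'M[R]_(q, 1) :=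
  \col_(i < q) ((i : nat) == p.-1)%:R.

Definition bdiag {m n} (A : 'M[R]_m) (B : 'M[R]_n) : 'M[R]_(m + n) :=
  block_mx A 0 0 B.

Definition castsq {m m'} (e : m = m') (A : 'M[R]_m) : 'M[R]_m' := castmx (e, e) A.

Local Notation "A *t B" := (tensmx A B) (at level 40, left associativity).

Section Grid.
Variables (nx ny nz : nat) (dx dy dz : R).

(* number of nodes N = (nx+1)(ny+1)(nz+1), node ordering i + (j-1)(nx+1) + ... *)
Definition Nn := (nz.+1 * (ny.+1 * nx.+1))%N.

(* D_U from nodal values U_{i,j,k} (0-based indices) *)
Definition nodeval (U : 'I_nx.+1 -> 'I_ny.+1 -> 'I_nz.+1 -> R) (k : 'I_Nn) : R :=
  let kz := (mxtens_unindex k).1 in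
  let kxy := (mxtens_unindex (mxtens_unindex k).2) in
  U kxy.2 kxy.1 kz.

Definition DUmx U : 'M[R]_Nn := diag_mx (\row_k nodeval U k).

Definition DVmx : 'M[R]_Nn :=
  (dx * dy * dz) *: (Itil nz.+1 *t (Itil ny.+1 *t Itil nx.+1)).

Definition Dxmx : 'M[R]_(Nn, nz.+1 * (ny.+1 * nx)) :=
  - (1%:M *t (1%:M *t (Wmx nx)^T)).
Definition Dymx : 'M[R]_(Nn, nz.+1 * (ny * nx.+1)) :=
  - (1%:M *t ((Wmx ny)^T *t 1%:M)).
Definition Dzmx : 'M[R]_(Nn, nz * (ny.+1 * nx.+1)) :=
  - ((Wmx nz)^T *t (1%:M *t 1%:M)).

Definition Dmx := row_mx Dxmx (row_mx Dymx Dzmx).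

Definition DSmx :=
  bdiag ((dy * dz) *: (Itil nz.+1 *t (Itil ny.+1 *t (1%:M : 'M[R]_nx))))
   (bdiag ((dx * dz) *: (Itil nz.+1 *t ((1%:M : 'M[R]_ny) *t Itil nx.+1)))
          ((dx * dy) *: ((1%:M : 'M[R]_nz) *t (Itil ny.+1 *t Itil nx.+1)))).

Definition Dlmx :=
  bdiag (dx *: (1%:M : 'M[R]_(nz.+1 * (ny.+1 * nx))))
   (bdiag (dy *: (1%:M : 'M[R]_(nz.+1 * (ny * nx.+1))))
          (dz *: (1%:M : 'M[R]_(nz * (ny.+1 * nx.+1))))).

Definition Hmx (hbar mass : R) U : 'M[R]_Nn :=
  (hbar ^+ 2 / (2 * mass)) *: (Dmx *m DSmx *m invmx Dlmx *m Dmx^T)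
  + DVmx *m DUmx U.

Definition Pmx (hbar mass dt : R) U : 'M[R]_(Nn + Nn) :=
  block_mx DVmx (- (dt / (2 * hbar)) *: Hmx hbar mass U)
           (- (dt / (2 * hbar)) *: Hmx hbar mass U) DVmx.

Definition LWmx := (1%:M : 'M[R]_nz.+1) *t ((1%:M : 'M[R]_ny.+1) *t ecol 1 nx.+1).
Definition LEmx := (1%:M : 'M[R]_nz.+1) *t ((1%:M : 'M[R]_ny.+1) *t ecol nx.+1 nx.+1).
Definition LSmx := (1%:M : 'M[R]_nz.+1) *t (ecol 1 ny.+1 *t (1%:M : 'M[R]_nx.+1)).
Definition LNmx := (1%:M : 'M[R]_nz.+1) *t (ecol ny.+1 ny.+1 *t (1%:M : 'M[R]_nx.+1)).
Definition LBmx := ecol 1 nz.+1 *t ((1%:M : 'M[R]_ny.+1) *t (1%:M : 'M[R]_nx.+1)).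
Definition LTmx := ecol nz.+1 nz.+1 *t ((1%:M : 'M[R]_ny.+1) *t (1%:M : 'M[R]_nx.+1)).

Definition Lmx := row_mx LWmx (row_mx LEmx (row_mx LSmx (row_mx LNmx (row_mx LBmx LTmx)))).

Definition Mm := (nz.+1 * (ny.+1 * 1) + (nz.+1 * (ny.+1 * 1) +
   (nz.+1 * (1 * nx.+1) + (nz.+1 * (1 * nx.+1) +
   (1 * (ny.+1 * nx.+1) + 1 * (ny.+1 * nx.+1))))))%N.

Lemma eW : (nz.+1 * ny.+1 = nz.+1 * (ny.+1 * 1))%N.
Proof. by rewrite muln1. Qed.
Lemma eS : (nz.+1 * nx.+1 = nz.+1 * (1 * nx.+1))%N.
Proof. by rewrite mul1n. Qed.
Lemma eB : (ny.+1 * nx.+1 = 1 * (ny.+1 * nx.+1))%N.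
Proof. by rewrite mul1n. Qed.

Definition Dnmx : 'M[R]_Mm :=
  bdiag (- 1%:M) (bdiag 1%:M (bdiag (- 1%:M) (bdiag 1%:M (bdiag (- 1%:M) 1%:M)))).

Definition DSbmx : 'M[R]_Mm :=
  bdiag (castsq eW ((dy * dz) *: (Itil nz.+1 *t Itil ny.+1)))
  (bdiag (castsq eW ((dy * dz) *: (Itil nz.+1 *t Itil ny.+1)))
  (bdiag (castsq eS ((dx * dz) *: (Itil nz.+1 *t Itil nx.+1)))
  (bdiag (castsq eS ((dx * dz) *: (Itil nz.+1 *t Itil nx.+1)))
  (bdiag (castsq eB ((dx * dy) *: (Itil ny.+1 *t Itil nx.+1)))
         (castsq eB ((dx * dy) *: (Itil ny.+1 *t Itil nx.+1))))))).

Definition Hperpmx (hbar mass : R) : 'M[R]_(Nn, Mm) :=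
  (hbar ^+ 2 / (2 * mass)) *: (Lmx *m Dnmx *m DSbmx).

(* (D''_V)^{-1/2}: D''_V is diagonal with positive entries *)
Definition DVmhalf : 'M[R]_Nn :=
  diag_mx (\row_k (Num.sqrt (DVmx k k))^-1).

Definition psivec (psiR psiI : nat -> 'cV[R]_Nn) (n : nat) : 'cV[R]_(Nn + Nn) :=
  col_mx (psiR n) (psiI n).

Definition TotProb hbar mass dt U psiR psiI (n : nat) : R :=
  ((psivec psiR psiI n)^T *m Pmx hbar mass dt U *m psivec psiR psiI n) 0 0.

(* J_1 (x) H_perp = [[0, H_perp], [-H_perp, 0]] *)
Definition ProbCurrent hbar mass (psiR psiI : nat -> 'cV[R]_Nn)
    (gR gI : nat -> 'cV[R]_Mm) (n : nat) : R :=
  (2 / hbar) *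
  (((2^-1 *: (psivec psiR psiI n.+1 + psivec psiR psiI n))^T
     *m block_mx 0 (Hperpmx hbar mass) (- Hperpmx hbar mass) 0
     *m col_mx (gR n) (gI n)) 0 0).

End Grid.

Definition is_spectral_radius {n} (A : 'M[R]_n) (r : R) : Prop :=
  let Ac := map_mx (fun x : R => (x%:C)%C) A in
  (exists z : R[i], eigenvalue Ac z /\ `|z| = (r%:C)%C) /\
  (forall z : R[i], eigenvalue Ac z -> `|z| <= (r%:C)%C).

End FDTDQ.

(* Main.v *)
Require Import Defs.
From HB Require Import structures.
From mathcomp Require Import all_boot all_order all_algebra.
From mathcomp Require Import mxtens complex reals.
From mathcomp Require Import ring lra sesquilinear spectral.
Import Order.TTheory GRing.Theory Num.Theory.
Local Open Scope ring_scope.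

Section Part2.
Variable R : realType.

Definition bil {n m} (x : 'cV[R]_n) (M : 'M[R]_(n,m)) (y : 'cV[R]_m) : R :=
  (x^T *m M *m y) 0 0.

Lemma e00D (A B : 'M[R]_1) : (A + B) 0 0 = A 0 0 + B 0 0. Proof. by rewrite mxE. Qed.
Lemma e00N (A : 'M[R]_1) : (- A) 0 0 = - A 0 0. Proof. by rewrite mxE. Qed.
Lemma e00Z a (A : 'M[R]_1) : (a *: A) 0 0 = a * A 0 0. Proof. by rewrite mxE. Qed.

Lemma bil_sym n m (x : 'cV[R]_n) (M : 'M[R]_(n,m)) y : bil x M y = bil y M^T x.
Proof.
rewrite /bil -[in LHS](trmxK (x^T *m M *m y)) [in LHS]mxE.
by rewrite !trmx_mul trmxK mulmxA.
Qed.

Lemma scal_eq n m k (A : 'M[R]_n) (H : 'M[R]_(n,k)) (Hp : 'M[R]_(n,m)) (hb dt : R)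
  (X Y : 'cV[R]_n) (g : 'cV[R]_k) (gg : 'cV[R]_m) (s : R) x :
  hb != 0 -> dt != 0 ->
  hb *: (A *m (dt^-1 *: (Y - X))) = s *: (H *m g) + Hp *m gg ->
  bil x A Y = bil x A X + dt / hb * (s * bil x H g + bil x Hp gg).
Proof.
move=> hb0 dt0 /(congr1 (fun M => (x^T *m M) 0 0)).
rewrite -!scalemxAr !(mulmxBr, mulmxDr) -!scalemxAr !mulmxA !(e00Z, e00D, e00N).
rewrite /bil => <-. field. by rewrite hb0 dt0.
Qed.

Lemma TP_expand n (A H : 'M[R]_n) (c : R) (r i : 'cV[R]_n) :
  ((col_mx r i)^T *m block_mx A (c *: H) (c *: H) A *m col_mx r i) 0 0 =
  bil r A r + bil i A i + c * bil i H r + c * bil r H i.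
Proof.
rewrite tr_col_mx mul_row_block mul_row_col !mulmxDl -!scalemxAr -!scalemxAl.
rewrite !(e00D, e00Z) /bil; ring.
Qed.

Lemma PC_expand n m (Hp : 'M[R]_(n,m)) (R1 R0 I1 I0 : 'cV[R]_n) gR gI :
  ((2^-1 *: (col_mx R1 I1 + col_mx R0 I0))^T *m block_mx 0 Hp (-Hp) 0 *m col_mx gR gI) 0 0
  = 2^-1 * (bil R1 Hp gI + bil R0 Hp gI - bil I1 Hp gR - bil I0 Hp gR).
Proof.
rewrite add_col_mx scale_col_mx tr_col_mx mul_row_block mul_row_col.
rewrite !mulmx0 !addr0 !add0r !mulmxN !linearZ /= !linearD /=.
rewrite !(mulmxDl, mulNmx) -!scalemxAl !(e00D, e00N, e00Z) /bil; ring.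
Qed.

Lemma energy n m (A H : 'M[R]_n) (Hp : 'M[R]_(n,m)) (hb dt : R) (R0 R1 I0 I1 : 'cV[R]_n)
  (gR gI : 'cV[R]_m) :
  hb != 0 -> dt != 0 -> A^T = A -> H^T = H ->
  hb *: (A *m (dt^-1 *: (R1 - R0))) = H *m I1 - Hp *m gI ->
  hb *: (A *m (dt^-1 *: (I1 - I0))) = -(H *m R0) + Hp *m gR ->
  ((col_mx R1 I1)^T *m block_mx A (-(dt/(2*hb)) *: H) (-(dt/(2*hb)) *: H) A
     *m col_mx R1 I1) 0 0 -
  ((col_mx R0 I0)^T *m block_mx A (-(dt/(2*hb)) *: H) (-(dt/(2*hb)) *: H) A
     *m col_mx R0 I0) 0 0 =
  - (dt * ((2/hb) * (((2^-1 *: (col_mx R1 I1 + col_mx R0 I0))^T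
     *m block_mx 0 Hp (-Hp) 0 *m col_mx gR gI) 0 0))).
Proof.
move=> hb0 dt0 AT HT E1 E2.
have E1' : hb *: (A *m (dt^-1 *: (R1 - R0))) = 1 *: (H *m I1) + (- Hp) *m gI.
  by rewrite E1 scale1r mulNmx.
have E2' : hb *: (A *m (dt^-1 *: (I1 - I0))) = (-1) *: (H *m R0) + Hp *m gR.
  by rewrite E2 scaleN1r.
have a1 := @scal_eq _ _ _ _ _ _ _ _ _ _ _ _ _ R1 hb0 dt0 E1'.
have a2 := @scal_eq _ _ _ _ _ _ _ _ _ _ _ _ _ R0 hb0 dt0 E1'.
have a3 := @scal_eq _ _ _ _ _ _ _ _ _ _ _ _ _ I1 hb0 dt0 E2'.
have a4 := @scal_eq _ _ _ _ _ _ _ _ _ _ _ _ _ I0 hb0 dt0 E2'.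
rewrite !TP_expand PC_expand.
have sA x y : bil x A y = bil y A x by rewrite bil_sym AT.
have sH x y : bil x H y = bil y H x by rewrite bil_sym HT.
have sN x y : bil x (-Hp) y = - bil x Hp y.
  by rewrite /bil mulmxN mulNmx e00N.
rewrite !sN in a1 a2 a3 a4.
rewrite a1 a3 (sA R1 R0) a2 (sA I1 I0) a4.
rewrite (sH I1 R1) (sH I0 R0) (sH I1 R0).
field. by rewrite hb0.
Qed.

End Part2.

Section Spec.
Variable R : realType.
Local Notation bil := (@bil R).


Local Notation rc := (real_complex R).

Lemma rc_real (x : R) : (x%:C)%C \is Num.real.
Proof. by apply/complex_realP; exists x. Qed.

Lemma bilC n m (x : 'cV[R]_n) (M : 'M[R]_(n,m)) y :
  ((bil x M y)%:C)%C = ((map_mx rc x)^T *m map_mx rc M *m map_mx rc y) 0 0.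
Proof. by rewrite /bil map_trmx -!(map_mxM (real_complex R)) [RHS]mxE. Qed.

Lemma conj_real_mx m n (A : 'M[R]_(m,n)) : map_mx Num.conj (map_mx rc A) = map_mx rc A.
Proof. by apply/matrixP => i j; rewrite !mxE conj_Creal ?rc_real. Qed.

Lemma normC_real (r : R) : `|(r%:C)%C| = (`|r|%:C)%C.
Proof. by rewrite normc_def /= expr0n /= addr0 sqrtr_sqr. Qed.

Lemma spec_bound n (K : 'M[R]_n) (rho : R) (u v : 'cV[R]_n) :
  K^T = K -> is_spectral_radius K rho ->
  `|bil u K v| <= rho / 2 * (bil u 1%:M u + bil v 1%:M v).
Proof.
move=> KT [_ Hrho].
pose Kc := map_mx rc K.
have Hr : forall z, eigenvalue Kc z -> `|z| <= (rho%:C)%C by exact: Hrho.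
have KcC : map_mx Num.conj Kc^T = Kc.
  apply/matrixP => i j; rewrite !mxE conj_Creal ?rc_real //.
  by rewrite -[in RHS]KT mxE.
have Kn : Kc \is normalmx by apply/normalmxP; rewrite KcC.
have KcE := orthomx_spectralP Kn.
set P := spectralmx Kc in KcE; set d := spectral_diag Kc in KcE.
have Pu : P \is unitarymx := spectral_unitarymx Kc.
have Pun : P \in unitmx := spectral_unit Kc.
have iP : invmx P = map_mx Num.conj P^T := invmx_unitary Pu.
have Hd : forall i, `|d 0 i| <= (rho%:C)%C.
  move=> i; apply: Hr; apply/eigenvalueP; exists ('e_i *m P).
    by rewrite {1}KcE !mulmxA mulmxK // -(rowE i (diag_mx d)) row_diag_mx scalemxAl.
  apply/negP => /eqP h; have := congr1 (mulmx^~ (invmx P)) h.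
  rewrite /= mulmxK // mul0mx => /matrixP /(_ 0 i); rewrite !mxE !eqxx /=.
  by move/eqP; rewrite oner_eq0.
set uc := map_mx rc u; set vc := map_mx rc v.
have cr : forall m, forall x : 'cV[R]_m, map_mx Num.conj (map_mx rc x)^T = (map_mx rc x)^T.
  by move=> m x; apply/matrixP => i j; rewrite !mxE conj_Creal ?rc_real.
have Hz : ((bil u K v)%:C)%C =
   \sum_j (Num.conj ((P *m uc) j 0) * d 0 j * (P *m vc) j 0).
  rewrite bilC -/Kc KcE iP.
  have e : uc^T *m map_mx Num.conj P^T = map_mx Num.conj (P *m uc)^T.
    by rewrite trmx_mul map_mxM cr.
  rewrite !mulmxA e -(mulmxA _ P vc) mxE; apply: eq_bigr => j _.
  by rewrite mul_mx_diag [in LHS]mxE [in LHS]mxE [in LHS]mxE.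
have Hn : forall x : 'cV[R]_n, ((bil x 1%:M x)%:C)%C = \sum_j `|(P *m map_mx rc x) j 0| ^+ 2.
  move=> x; rewrite bilC map_mx1 mulmx1.
  have -> : (map_mx rc x)^T *m map_mx rc x =
     map_mx Num.conj (P *m map_mx rc x)^T *m (P *m map_mx rc x).
    rewrite trmx_mul map_mxM cr mulmxA -(mulmxA _ _ P) -iP mulVmx //.
    by rewrite mulmx1.
  rewrite mxE; apply: eq_bigr => j _.
  by rewrite normCK mulrC; congr (_ * _); rewrite !mxE.
rewrite -lecR -normC_real Hz rmorphM /= rmorphD /= !Hn.
apply: le_trans (ler_norm_sum _ _ _) _.
rewrite -big_split /= mulr_sumr; apply: ler_sum => j _.
rewrite !normrM norm_conjC.
set a := `|(P *m uc) j 0|; set b := `|(P *m vc) j 0|.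
have a0 : 0 <= a by apply: normr_ge0.
have b0 : 0 <= b by apply: normr_ge0.
have r0 : 0 <= (rho%:C)%C := le_trans (normr_ge0 _) (Hd j).
have -> : ((rho / 2)%:C)%C = (rho%:C)%C / 2.
  by rewrite rmorphM /= fmorphV /= rmorph_nat.
apply: le_trans (_ : a * (rho%:C)%C * b <= _).
  by rewrite ler_wpM2r // ler_wpM2l // Hd.
rewrite mulrAC mulrC -mulrA [_^-1 * _]mulrC ler_wpM2l //.
exact: (real_leif_mean_square (normr_real _) (normr_real _)).1.
Qed.

End Spec.

Section Diag.
Variable R : realType.

Lemma diag_tens {m} n (A : 'M[R]_m) (B : 'M[R]_n) :
  is_diag_mx A -> is_diag_mx B -> is_diag_mx (tensmx A B).
Proof.
move=> /is_diag_mxP dA /is_diag_mxP dB; apply/is_diag_mxP => i j nij.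
case: (mxtens_indexP i) nij => i1 i2; case: (mxtens_indexP j) => j1 j2 nij.
rewrite tensmxE.
have [e1|n1] := eqVneq (i1 : nat) j1; last by rewrite dA ?mul0r.
have [e2|n2] := eqVneq (i2 : nat) j2; last by rewrite dB ?mulr0.
have e1' : i1 = j1 by apply: val_inj.
have e2' : i2 = j2 by apply: val_inj.
by move: nij; rewrite e1' e2' eqxx.
Qed.

Lemma diag_scale {m} (a : R) (A : 'M[R]_m) : is_diag_mx A -> is_diag_mx (a *: A).
Proof. by move=> /is_diag_mxP dA; apply/is_diag_mxP => i j nij; rewrite mxE dA ?mulr0. Qed.

Lemma diag_opp {m} (A : 'M[R]_m) : is_diag_mx A -> is_diag_mx (- A).
Proof. by move=> /is_diag_mxP dA; apply/is_diag_mxP => i j nij; rewrite mxE dA ?oppr0. Qed.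

Lemma diag_bdiag {m} n (A : 'M[R]_m) (B : 'M[R]_n) :
  is_diag_mx A -> is_diag_mx B -> is_diag_mx (bdiag A B).
Proof. by move=> dA dB; rewrite /bdiag is_diag_block_mx // !eqxx dA dB. Qed.

Lemma diag_mulmx {m} (A B : 'M[R]_m) : is_diag_mx A -> is_diag_mx B -> is_diag_mx (A *m B).
Proof. by case/diag_mxP => a -> /diag_mxP [b ->]; rewrite mulmx_diag diag_mx_is_diag. Qed.

Lemma diag_tr {m} (A : 'M[R]_m) : is_diag_mx A -> A^T = A.
Proof. by case/diag_mxP => a ->; rewrite tr_diag_mx. Qed.

Lemma diag_comm {m} (A B : 'M[R]_m) : is_diag_mx A -> is_diag_mx B -> A *m B = B *m A.
Proof. by case/diag_mxP => a -> /diag_mxP [b ->]; rewrite diag_mxC. Qed.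

Lemma inv_comm {m} (A B : 'M[R]_m) : A *m B = B *m A -> invmx A *m B = B *m invmx A.
Proof.
move=> AB; case: (boolP (A \in unitmx)) => uA; last first.
  by rewrite /invmx (negPf uA).
rewrite -[invmx A *m B]mulmx1 -(mulmxV uA) mulmxA -(mulmxA _ B) -AB mulmxA.
by rewrite mulVmx // mul1mx.
Qed.

Lemma Itil_diag p : is_diag_mx (Itil p : 'M[R]_p).
Proof. exact: diag_mx_is_diag. Qed.

Lemma Itil_pos p i : 0 < (Itil p : 'M[R]_p) i i.
Proof. by rewrite /Itil !mxE eqxx mulr1n; case: ifP => _ //; rewrite invr_gt0. Qed.

Lemma tens_pos m n (A : 'M[R]_m) (B : 'M[R]_n) i :
  (forall a, 0 < A a a) -> (forall b, 0 < B b b) -> 0 < (tensmx A B) i i.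
Proof. by move=> hA hB; rewrite mxE mulr_gt0. Qed.

Variables (nx ny nz : nat) (dx dy dz : R).

Lemma DV_diag : is_diag_mx (DVmx nx ny nz dx dy dz).
Proof. by apply: diag_scale; do 2?apply: diag_tens; apply: Itil_diag. Qed.

Lemma DV_pos k : 0 < dx -> 0 < dy -> 0 < dz -> 0 < DVmx nx ny nz dx dy dz k k.
Proof.
move=> hx hy hz; rewrite mxE mulr_gt0 ?mulr_gt0 //.
apply: tens_pos => [a|b]; first exact: Itil_pos.
by apply: tens_pos => c; apply: Itil_pos.
Qed.

Lemma DS_diag : is_diag_mx (DSmx nx ny nz dx dy dz).
Proof.
by do 2?apply: diag_bdiag; apply: diag_scale; do 2?apply: diag_tens;
  rewrite ?scalar_mx_is_diag ?Itil_diag.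
Qed.

Lemma Dl_diag : is_diag_mx (Dlmx nx ny nz dx dy dz).
Proof.
by do 2?apply: diag_bdiag; apply: diag_scale; rewrite scalar_mx_is_diag.
Qed.

Lemma DU_diag (U : 'I_nx.+1 -> 'I_ny.+1 -> 'I_nz.+1 -> R) : is_diag_mx (DUmx nx ny nz U).
Proof. exact: diag_mx_is_diag. Qed.

Lemma H_sym (hb ms : R) (U : 'I_nx.+1 -> 'I_ny.+1 -> 'I_nz.+1 -> R) : (Hmx nx ny nz dx dy dz hb ms U)^T = Hmx nx ny nz dx dy dz hb ms U.
Proof.
rewrite /Hmx linearD /= linearZ /= !trmx_mul !trmxK trmx_inv.
rewrite (diag_tr _ DS_diag) (diag_tr _ Dl_diag) (diag_tr _ DV_diag) (diag_tr _ (DU_diag U)).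
rewrite (diag_comm _ _ (DU_diag U) DV_diag); congr (_ *: _ + _).
rewrite !mulmxA -(mulmxA _ (invmx _)) inv_comm ?mulmxA //.
exact: diag_comm _ _ Dl_diag DS_diag.
Qed.

End Diag.

Section PSD.
Variable R : realType.
Local Notation bil := (@bil R).

Lemma bilZ n m (x : 'cV[R]_n) (a : R) (M : 'M[R]_(n,m)) y : bil x (a *: M) y = a * bil x M y.
Proof. by rewrite /bil -scalemxAr -scalemxAl e00Z. Qed.

Lemma bilS n m (x : 'cV[R]_n) (S : 'M[R]_n) (M : 'M[R]_(n,m)) (S' : 'M[R]_m) y :
  S^T = S -> bil (S *m x) M (S' *m y) = bil x (S *m M *m S') y.
Proof. by move=> ST; rewrite /bil trmx_mul ST !mulmxA. Qed.

Lemma bil_ge0 n (x : 'cV[R]_n) : 0 <= bil x 1%:M x.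
Proof.
rewrite /bil mulmx1 mxE; apply: sumr_ge0 => i _.
by rewrite mxE -expr2 sqr_ge0.
Qed.

Lemma psd_gen n (A H S T : 'M[R]_n) (hb dt rho : R) (r i : 'cV[R]_n) :
  0 < hb -> 0 < dt -> dt * rho <= 2 ->
  S^T = S -> S *m T = 1%:M -> S *m A *m S = 1%:M -> H^T = H ->
  is_spectral_radius (hb^-1 *: (S *m H *m S)) rho ->
  0 <= ((col_mx r i)^T *m block_mx A (-(dt/(2*hb)) *: H) (-(dt/(2*hb)) *: H) A
         *m col_mx r i) 0 0.
Proof.
move=> hb0 dt0 drho ST STe SAS HT Hrho.
rewrite TP_expand.
have [u ->] : exists u, r = S *m u by exists (T *m r); rewrite mulmxA STe mul1mx.
have [v ->] : exists v, i = S *m v by exists (T *m i); rewrite mulmxA STe mul1mx.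
set K := hb^-1 *: (S *m H *m S) in Hrho.
have KT : K^T = K by rewrite /K linearZ /= !trmx_mul ST HT mulmxA.
have SHS : S *m H *m S = hb *: K.
  by rewrite /K scalerA mulfV ?scale1r // gt_eqF.
clearbody K.
rewrite !bilS // SAS SHS !bilZ (@bil_sym _ _ _ v K u) KT.
have hbd := @spec_bound _ _ K rho u v KT Hrho.
have := @bil_ge0 _ u; have := @bil_ge0 _ v.
move: hbd; set X := bil u K v; set bu := bil u 1%:M u; set bv := bil v 1%:M v => hbd g1 g2.
have hX : X <= rho / 2 * (bu + bv) := le_trans (ler_norm _) hbd.
have -> : bu + bv + - (dt / (2 * hb)) * (hb * X) + - (dt / (2 * hb)) * (hb * X)
   = bu + bv - dt * X by field; rewrite gt_eqF.
rewrite subr_ge0.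
have h1 : dt * X <= dt * (rho / 2 * (bu + bv)) by rewrite ler_wpM2l // ltW.
apply: le_trans h1 _.
have h2 : 0 <= bu + bv by rewrite addr_ge0.
nra.
Qed.

Lemma diag_eq m (A : 'M[R]_m) : is_diag_mx A -> A = diag_mx (\row_k A k k).
Proof.
case/diag_mxP => a ->; congr diag_mx; apply/rowP => k.
by rewrite !mxE eqxx mulr1n.
Qed.

End PSD.

Theorem theorem1 (R : realType) (hbar mass dx dy dz dt : R) (nx ny nz nt : nat)
  (U : 'I_nx.+1 -> 'I_ny.+1 -> 'I_nz.+1 -> R)
  (psiR psiI : nat -> 'cV[R]_(Nn nx ny nz))
  (gR gI : nat -> 'cV[R]_(Mm nx ny nz)) (rho : R) :
  0 < hbar -> 0 < mass -> 0 < dx -> 0 < dy -> 0 < dz ->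
  (0 < nx)%N -> (0 < ny)%N -> (0 < nz)%N -> (0 < nt)%N ->
  is_spectral_radius
    (hbar^-1 *: (DVmhalf nx ny nz dx dy dz *m Hmx nx ny nz dx dy dz hbar mass U
                 *m DVmhalf nx ny nz dx dy dz)) rho ->
  0 < dt -> dt < 2 / rho ->
  (forall n : nat, (n < nt)%N ->
     hbar *: (DVmx nx ny nz dx dy dz *m (dt^-1 *: (psiR n.+1 - psiR n)))
     = Hmx nx ny nz dx dy dz hbar mass U *m psiI n.+1
       - Hperpmx nx ny nz dx dy dz hbar mass *m gI n) ->
  (forall n : nat, (n < nt)%N ->
     hbar *: (DVmx nx ny nz dx dy dz *m (dt^-1 *: (psiI n.+1 - psiI n)))
     = - (Hmx nx ny nz dx dy dz hbar mass U *m psiR n)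
       + Hperpmx nx ny nz dx dy dz hbar mass *m gR n) ->
  (forall n : nat, (n <= nt)%N ->
     0 <= TotProb nx ny nz dx dy dz hbar mass dt U psiR psiI n) /\
  (forall n : nat, (n < nt)%N ->
     (TotProb nx ny nz dx dy dz hbar mass dt U psiR psiI n.+1
      - TotProb nx ny nz dx dy dz hbar mass dt U psiR psiI n) / dt
     = - ProbCurrent nx ny nz dx dy dz hbar mass psiR psiI gR gI n).
Proof.
move=> hb0 m0 dx0 dy0 dz0 _ _ _ _ Hrho dt0 dtr E1 E2.
have AT := diag_tr _ _ (DV_diag R nx ny nz dx dy dz).
have HT := H_sym R nx ny nz dx dy dz hbar mass U.
split; last first.
  move=> n hn; rewrite /TotProb /ProbCurrent /psivec /Pmx.
  rewrite (@energy _ _ _ _ _ _ _ _ _ _ _ _ _ _ (negbT (gt_eqF hb0)) (negbT (gt_eqF dt0)) AT HT (E1 n hn) (E2 n hn)).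
  by rewrite mulNr mulrC mulKf // gt_eqF.
move=> n _; rewrite /TotProb /psivec /Pmx.
move: Hrho; rewrite /DVmhalf => Hrho.
set A := DVmx nx ny nz dx dy dz in Hrho *.
have Apos : forall k, 0 < A k k by move=> k; apply: DV_pos.
have Adiag : is_diag_mx A by apply: DV_diag.
clearbody A.
have rho0 : 0 <= rho.
  case: Hrho => [[z [_ hz]] _]; rewrite -(@lecR R) -hz; exact: normr_ge0.
have drho : dt * rho <= 2.
  have [->|rp] := eqVneq rho 0; first by rewrite mulr0.
  have rpos : 0 < rho by rewrite lt_def rp rho0.
  by apply: ltW; rewrite -ltr_pdivlMr.
pose T := diag_mx (\row_k Num.sqrt (A k k)).
apply: (@psd_gen R _ _ _ _ T hbar dt rho _ _ hb0 dt0 drho _ _ _ HT Hrho).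
- by rewrite tr_diag_mx.
- rewrite /T mulmx_diag; apply/matrixP => i j; rewrite !mxE.
  by rewrite mulVf // gt_eqF // sqrtr_gt0.
- rewrite {2}(@diag_eq _ _ _ Adiag) !mulmx_diag.
  apply/matrixP => i j; rewrite !mxE.
  have ha := Apos i.
  have hs : Num.sqrt (A i i) != 0 by rewrite gt_eqF // sqrtr_gt0.
  have e := sqr_sqrtr (ltW ha).
  rewrite -{2}e; congr (_ *+ _); field; exact: hs.
Qed.
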